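(* Let $m\ge1$, let $\Omega$ be a set with $|\Omega|=2^m$, and let $D:\Omega\to[0,1]$ satisfy $\sum_{y\in\Omega}D(y)\le1$. Let $H=\sum_{y\in\Omega}D(y)\log\frac1{D(y)}$. (i) If $H\ge1$, then $$\frac{\sum_{y\in\Omega}D(y)(\log D(y))^2}{H^2}\le\Big(1+\frac{\log(m+\log m+1.1)}{m}\Big)m = m+\log(m+\log m+1.1).$$ (ii) If $H\le1$ and $m\ge2$, then $$\sum_{y\in\Omega}D(y)(\log D(y))^2\le m+\log(m+\log m+2.5).$$
   Context: All logarithms are base 2, with the convention $0\log\frac10=0$ and $0\cdot(\log 0)^2=0$. *)

(* Defs.v *)
From HB Require Import structures.
From mathcomp Require Import all_boot all_order all_algebra.
From mathcomp Require Import all_classical all_reals.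
From mathcomp Require Import exp.
Set Implicit Arguments. Unset Strict Implicit. Unset Printing Implicit Defensive.
Import Order.TTheory GRing.Theory Num.Theory.
Local Open Scope ring_scope.

Definition log2 {R : realType} (x : R) : R := ln x / ln 2.

Definition entTerm {R : realType} (x : R) : R :=
  if x == 0 then 0 else x * log2 (x^-1).

Definition sqlogTerm {R : realType} (x : R) : R :=
  if x == 0 then 0 else x * (log2 x) ^+ 2.

Definition entropy {R : realType} {T : finType} (D : T -> R) : R :=
  \sum_(y : T) entTerm (D y).

Definition sqlogSum {R : realType} {T : finType} (D : T -> R) : R :=
  \sum_(y : T) sqlogTerm (D y).

(* Main.v *)
Require Import Defs.
From HB Require Import structures.
From mathcomp Require Import all_boot all_order all_algebra.
From mathcomp Require Import all_classical all_reals.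
From mathcomp Require Import sequences exp.
From mathcomp Require Import ring lra.
Import Order.TTheory GRing.Theory Num.Theory.
Local Open Scope ring_scope.

Lemma ln_le_sub1 (R : realType) (y : R) : 0 < y -> ln y <= y - 1.
Proof.
move=> y0; have := @le_ln1Dx R (y - 1).
have -> : 1 + (y - 1) = y by ring.
by apply; lra.
Qed.

Lemma ln2_ge (R : realType) : 1/2 <= ln (2:R).
Proof.
have := @ln_le_sub1 R (2^-1) ltac:(lra).
rewrite lnV ?posrE //; lra.
Qed.

Lemma pointwise (R : realType) (x0 p : R) : 1 < x0 * ln 2 -> 0 <= p <= 1 ->
  sqlogTerm p - (x0 - x0 / (x0 * ln 2 - 1)) * entTerm p
  <= x0 * (x0 / (x0 * ln 2 - 1)) * expR (- (ln 2 * x0)).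
Proof.
move=> hx /andP[p0 p1].
have k0 : 0 < ln (2:R) by have := @ln2_ge R; lra.
have x00 : 0 < x0.
  by rewrite -(pmulr_lgt0 _ k0); lra.
have e0 : 0 < x0 * ln 2 - 1 by lra.
set k := ln (2:R) in k0 hx e0 *.
set d := x0 / (x0 * k - 1).
have d0 : 0 < d by rewrite /d divr_gt0.
have c0 : 0 <= x0 * d * expR (- (k * x0)).
  by rewrite mulr_ge0 ?expR_ge0 // mulr_ge0 // ltW.
rewrite /sqlogTerm /entTerm; case: eqP => [_|/eqP pn0]; first by rewrite mulr0 subr0.
have pp : 0 < p by rewrite lt0r pn0.
set x := - ln p / k.
have hl1 : log2 p = - x by rewrite /log2 /x mulNr opprK.
have hl2 : log2 p^-1 = x by rewrite /log2 /x lnV ?posrE.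
have x0' : 0 <= x.
  rewrite /x mulNr oppr_ge0 pmulr_lle0 ?invr_gt0 //; exact: ln_le0.
rewrite hl1 hl2 sqrrN.
have pe : p = expR (- (k * x)).
  have -> : k * x = - ln p by rewrite /x; field; rewrite gt_eqF.
by rewrite opprK lnK ?posrE.
have key : x * (x - (x0 - d)) <= x0 * d * expR (k * x - k * x0).
  case: (lerP (x - (x0 - d)) 0) => hxa.
    apply: (@le_trans _ _ 0); first exact: mulr_ge0_le0.
    by rewrite mulr_ge0 ?expR_ge0 // mulr_ge0 // ltW.
  have h1 := @expR_ge1Dx R (x / x0 - 1).
  have h2 := @expR_ge1Dx R ((x - (x0 - d)) / d - 1).
  rewrite addrCA subrr addr0 in h1; rewrite addrCA subrr addr0 in h2.
  have := ler_pM (divr_ge0 x0' (ltW x00)) (divr_ge0 (ltW hxa) (ltW d0)) h1 h2.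
  rewrite -expRD.
  have -> : x / x0 - 1 + ((x - (x0 - d)) / d - 1) = k * x - k * x0.
    rewrite /d; field; rewrite ?gt_eqF //.
  move=> h.
  have -> : x * (x - (x0 - d)) = x0 * d * (x / x0 * ((x - (x0 - d)) / d)).
    by field; rewrite ?gt_eqF.
  by rewrite ler_pM2l // mulr_gt0.
have : p * (x * (x - (x0 - d))) <= p * (x0 * d * expR (k * x - k * x0)).
  by rewrite ler_pM2l.
have -> : p * (x0 * d * expR (k * x - k * x0)) = x0 * d * expR (- (k * x0)).
  rewrite {1}pe mulrCA mulrA [in RHS]mulrC -[in LHS]mulrA -expRD mulrC.
  by congr (_ * expR _); ring.
move=> h; apply: le_trans h; rewrite le_eqVlt; apply/orP; left; apply/eqP; ring.
Qed.

Lemma core (R : realType) (m : nat) (T : finType) (D : T -> R) (x0 Q : R) :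
  #|T| = (2 ^ m)%N -> (forall y, 0 <= D y <= 1) ->
  1 < x0 * ln 2 -> 0 < Q -> x0 = m%:R + ln Q / ln 2 ->
  sqlogSum D <= (x0 - x0 / (x0 * ln 2 - 1)) * entropy D
                + x0 * (x0 / (x0 * ln 2 - 1)) / Q.
Proof.
move=> hT hD hx Q0 hx0.
have k0 : 0 < ln (2:R) by have := @ln2_ge R; lra.
set k := ln (2:R) in k0 hx hx0 *.
set d := x0 / (x0 * k - 1).
have h : sqlogSum D - (x0 - d) * entropy D
   <= \sum_(y : T) (x0 * d * expR (- (k * x0))).
  rewrite /sqlogSum /entropy mulr_sumr -sumrB; apply: ler_sum => y _.
  exact: pointwise.
rewrite sumr_const hT -mulr_natl natrX in h.
have e2 : (2%:R : R) ^+ m = expR (m%:R * k).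
  by rewrite expRM_natl /k lnK ?posrE.
rewrite e2 mulrCA -expRD in h.
have e3 : m%:R * k + - (k * x0) = - ln Q.
  by rewrite hx0; field; rewrite gt_eqF.
rewrite e3 in h.
rewrite expRN lnK ?posrE // in h.
lra.
Qed.

Lemma bound (R : realType) (m : nat) (T : finType) (D : T -> R) (x0 Q : R) :
  #|T| = (2 ^ m)%N -> (forall y, 0 <= D y <= 1) ->
  1 < x0 * ln 2 -> 0 < Q -> x0 = m%:R + ln Q / ln 2 -> x0 <= Q ->
  exists a n : R, [/\ sqlogSum D <= a * entropy D + n, 0 <= n, a + n <= x0
     & (2 <= x0 * ln 2 -> 0 <= a)].
Proof.
move=> hT hD hx Q0 hx0 hxQ.
have k0 : 0 < ln (2:R) by have := @ln2_ge R; lra.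
have x00 : 0 < x0 by rewrite -(pmulr_lgt0 _ k0); lra.
have e0 : 0 < x0 * ln 2 - 1 by lra.
have d0 : 0 < x0 / (x0 * ln 2 - 1) by rewrite divr_gt0.
exists (x0 - x0 / (x0 * ln 2 - 1)), (x0 * (x0 / (x0 * ln 2 - 1)) / Q); split.
- exact: (@core R m T D x0 Q hT hD hx Q0 hx0).
- by apply: divr_ge0; [apply: mulr_ge0|]; apply: ltW.
- set d := x0 / (x0 * ln 2 - 1).
  have : x0 * d / Q <= d by rewrite ler_pdivrMr // mulrC ler_pM2l.
  lra.
- move=> h2; have : x0 / (x0 * ln 2 - 1) <= x0.
    rewrite ler_pdivrMr //; nra.
  lra.
Qed.

Lemma lnm_le (R : realType) (m : nat) : (1 <= m)%N ->
  ln (m%:R : R) <= (m%:R - 1) * ln 2.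
Proof.
move=> m1.
have hm : (m <= 2 ^ (m - 1))%N.
  by have := @ltn_expl 2 (m - 1) isT; case: m m1 => // m _; rewrite subn1.
have : (m%:R : R) <= 2 ^+ (m - 1) by rewrite -natrX ler_nat.
rewrite -ler_ln ?posrE ?exprn_gt0 ?ltr0n //.
rewrite lnXn // => h; apply: le_trans h _.
have -> : (m%:R - 1 : R) = (m - 1)%:R by rewrite natrB.
by rewrite mulr_natl.
Qed.

Lemma x0_le (R : realType) (m : nat) (dl : R) : (1 <= m)%N -> 1 <= dl ->
  ln (1 + dl) <= dl * ln 2 ->
  m%:R + log2 (m%:R + log2 (m%:R : R) + dl) <= m%:R + log2 (m%:R : R) + dl.
Proof.
move=> m1 d1 hd.
have k0 : 1/2 <= ln (2:R) := ln2_ge R.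
have lm0 : 0 <= ln (m%:R : R) by apply: ln_ge0; rewrite ler1n.
have lm1 := @lnm_le R m m1.
have m1' : (1 : R) <= m%:R by rewrite ler1n.
rewrite /log2.
set k := ln (2:R) in k0 hd lm1 *.
have kp : 0 < k by lra.
have hl : ln (m%:R : R) / k <= m%:R - 1 by rewrite ler_pdivrMr //.
have hl0 : 0 <= ln (m%:R : R) / k by rewrite divr_ge0 // ltW.
set Q := m%:R + ln m%:R / k + dl.
have Q0 : 0 < Q by rewrite /Q; lra.
have hQ : Q <= m%:R * (1 + dl) by rewrite /Q; nra.
have : ln Q <= ln (m%:R : R) + dl * k.
  rewrite -ler_ln ?posrE // in hQ; last by rewrite mulr_gt0 //; lra.
  rewrite lnM ?posrE in hQ; [|lra|lra]; lra.
move=> h.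
have : ln Q / k <= ln (m%:R : R) / k + dl.
  rewrite ler_pdivrMr // mulrDl divfK ?gt_eqF //.
have eQ : Q = m%:R + ln m%:R / k + dl by [].
lra.
Qed.

Lemma ln_21 (R : realType) : ln (1 + 11/10 : R) <= 11/10 * ln 2.
Proof.
have k0 : 1/2 <= ln (2:R) := ln2_ge R.
have -> : (1 + 11/10 : R) = 2 * (21/20) by field.
rewrite lnM ?posrE //; last by lra.
have := @ln_le_sub1 R (21/20) ltac:(lra); lra.
Qed.

Lemma ln_72 (R : realType) : ln (1 + 5/2 : R) <= 5/2 * ln 2.
Proof.
have k0 : 1/2 <= ln (2:R) := ln2_ge R.
have -> : (1 + 5/2 : R) = 2 * (7/4) by field.
rewrite lnM ?posrE //; last by lra.
have := @ln_le_sub1 R (7/4) ltac:(lra); lra.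
Qed.

Theorem mainTheorem2 (R : realType) (m : nat) (T : finType) (D : T -> R) :
  (1 <= m)%N -> #|T| = (2 ^ m)%N ->
  (forall y, 0 <= D y <= 1) ->
  \sum_(y : T) D y <= 1 ->
  (1 <= entropy D ->
     sqlogSum D / (entropy D) ^+ 2
       <= (1 + log2 (m%:R + log2 (m%:R : R) + 11/10) / m%:R) * m%:R
     /\ (1 + log2 (m%:R + log2 (m%:R : R) + 11/10) / m%:R) * m%:R
        = m%:R + log2 (m%:R + log2 (m%:R : R) + 11/10))
  /\
  (entropy D <= 1 -> (2 <= m)%N ->
     sqlogSum D <= m%:R + log2 (m%:R + log2 (m%:R : R) + 5/2)).
Proof.
move=> m1 hT hD hsum.
have k0 : 1/2 <= ln (2:R) := ln2_ge R.
have kp : 0 < ln (2:R) by lra.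
have m1' : (1:R) <= m%:R by rewrite ler1n.
have lm0 : 0 <= log2 (m%:R:R).
  by rewrite /log2 divr_ge0 //; [exact: ln_ge0 | exact: ltW].
split.
- move=> hH.
  set Q := m%:R + log2 (m%:R:R) + 11/10.
  have hxQ : m%:R + log2 Q <= Q.
    by apply: x0_le => //; [lra | exact: ln_21].
  have Q2 : 2 < Q by rewrite /Q; lra.
  have L1 : 1 < log2 Q.
    rewrite /log2 ltr_pdivlMr // mul1r ltr_ln ?posrE //; lra.
  set x0 := m%:R + log2 Q in hxQ *.
  have hx : 1 < x0 * ln 2 by rewrite /x0; nra.
  have [a [n [hS n0 hB ha]]] :=
    @bound R m T D x0 Q hT hD hx ltac:(lra) erefl hxQ.
  have eq : (1 + log2 Q / m%:R) * m%:R = x0.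
    by rewrite /x0; field; rewrite gt_eqF //; lra.
  split; last exact: eq.
  rewrite eq.
  set H := entropy D in hH hS *.
  have H2 : 1 <= H ^+ 2 by rewrite expr2; nra.
  rewrite ler_pdivrMr; last by lra.
  have x0p : 0 <= x0 by rewrite /x0; lra.
  case: (lerP 0 a) => ha0.
    have h1 : a * H <= a * H ^+ 2 by rewrite ler_wpM2l // expr2; nra.
    have h2 : n <= n * H ^+ 2 by nra.
    have h3 : (a + n) * H ^+ 2 <= x0 * H ^+ 2 by rewrite ler_wpM2r //; lra.
    lra.
  have h1 : a * H <= a by nra.
  have h2 : x0 <= x0 * H ^+ 2 by nra.
  lra.
- move=> hH m2.
  have m2' : (2:R) <= m%:R by rewrite ler_nat.
  set Q := m%:R + log2 (m%:R:R) + 5/2.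
  have hxQ : m%:R + log2 Q <= Q.
    by apply: x0_le => //; [lra | exact: ln_72].
  have Q4 : 4 < Q by rewrite /Q; lra.
  have L2 : 2 <= log2 Q.
    rewrite /log2 ler_pdivlMr //.
    have -> : 2 * ln (2:R) = ln 4.
      by rewrite (_ : (4:R) = 2 * 2) ?lnM ?posrE //; [ring | lra].
    rewrite ler_ln ?posrE //; lra.
  set x0 := m%:R + log2 Q in hxQ *.
  have hx : 1 < x0 * ln 2 by rewrite /x0; nra.
  have [a [n [hS n0 hB ha]]] :=
    @bound R m T D x0 Q hT hD hx ltac:(lra) erefl hxQ.
  have a0 : 0 <= a by apply: ha; rewrite /x0; nra.
  have : a * entropy D <= a by nra.
  lra.
Qed.
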